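(* Consider an instance of the MSSN-MC-HC problem with $m=|Q|$ sources and costs $c_s>0$, $c_r>0$, and suppose $\frac{c_s}{c_r}\ge \overline{m}(\overline{m}+1)(h_{\max}-1)$ for some integer $\overline{m}$ with $1\le \overline{m}<m$. Consider any iteration $j$ of the greedy phase of SmartSelect at which the number $u$ of uncovered sources satisfies $u>\overline{m}$. Suppose $b_1,b_2\in B^{(j)}$ are unpicked sinks such that $Q_1^{(j)}$ equals the set of all currently uncovered sources, and $1\le |Q_2^{(j)}|\le \overline{m}$. Then $C_1^{(j)}\le C_2^{(j)}$, i.e., the algorithm does not favor $b_2$ over $b_1$.
   Context: MSSN-MC-HC problem: given a finite undirected graph $G=(V,E)$ with $V=Q\cup R\cup B$ (pairwise disjoint; $Q$ = sources, $R$ = potential relay locations, $B$ = potential sink locations), costs $c_s$ per sink and $c_r$ per relay, and a positive integer $h_{\max}$, select $B'\subseteq B$, $R'\subseteq R$ such that in the subgraph induced by $Q\cup R'\cup B'$ every source has a path of at most $h_{\max}$ edges to some sink of $B'$, minimizing $c_s|B'|+c_r|R'|$. SmartSelect algorithm: (1) If for some $b\in B$ every source has a path of at most $h_{\max}$ edges to $b$ in the subgraph induced by $Q\cup B$, output $(\{b\},\emptyset)$. (2) If some source has no path of at most $h_{\max}$ edges in $G$ to any sink, declare infeasible. (3) For each $b_i\in B$ let $Q_i$ be the set of sources whose shortest path to $b_i$ in $G$ has at most $h_{\max}$ edges, and $R_i$ the set of relays whose shortest path to $b_i$ has at most $h_{\max}-1$ edges. (4) Greedy phase, iterations $j=0,1,\dots$: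 $B^{(0)}=B$, $Q_i^{(0)}=Q_i$; $B^{(j)}$ is the set of sinks not yet picked and $Q_i^{(j)}$ the set of sources of $Q_i$ not yet covered. In iteration $j$, for each $b_i\in B^{(j)}$, a relay-selection subroutine (e.g. the SPTiRP algorithm) applied to the subgraph of $G$ induced by $Q_i^{(j)}\cup R_i\cup\{b_i\}$ returns a set $\hat R_i^{(j)}\subseteq R_i$ consisting of the relays on one chosen path of at most $h_{\max}$ edges from each source of $Q_i^{(j)}$ to $b_i$ (so every source of $Q_i^{(j)}$ reaches $b_i$ within $h_{\max}$ hops using only $Q_i^{(j)}\cup\hat R_i^{(j)}\cup\{b_i\}$). Let $n_i^{(j)}$ be the number of relays in $\hat R_i^{(j)}$ not selected in earlier iterations (earlier-selected relays have cost zero thereafter), and $C_i^{(j)}=\frac{c_s+c_r n_i^{(j)}}{|Q_i^{(j)}|}$. The sink $b_i$ with least $C_i^{(j)}$ is picked (ties broken in favor of larger $|Q_i^{(j)}|$), its sources $Q_i^{(j)}$ become covered and the relays $\hat R_i^{(j)}$ are selected. Stop when all sources are covered; output the picked sinks and selected relays. *)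

(* Defs.v *)
From HB Require Import structures.
From mathcomp Require Import all_boot all_order all_algebra.
Set Implicit Arguments. Unset Strict Implicit. Unset Printing Implicit Defensive.
Import Order.TTheory GRing.Theory Num.Theory.

Definition hop_reach (T : finType) (e : rel T) (W : {set T}) (h : nat)
    (x y : T) : bool :=
  [exists n : 'I_h.+1, [exists t : n.-tuple T,
     [&& path e x t, last x t == y, uniq (x :: t) &
         all (fun v => v \in W) (x :: t)]]].

(* Q_i : sources whose shortest path (in G) to sink b has at most h edges. *)
Definition Qset (T : finType) (e : rel T) (Q : {set T}) (h : nat) (b : T)
  : {set T} := [set q in Q | hop_reach e setT h q b].

(* R_i : relays whose shortest path (in G) to b has at most h-1 edges. *)
Definition Rset (T : finType) (e : rel T) (Rl : {set T}) (h : nat) (b : T)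
  : {set T} := [set r in Rl | hop_reach e setT h.-1 r b].

(* Q_i^(j) : sources of Q_i not yet covered (U = uncovered sources). *)
Definition Qcur (T : finType) (e : rel T) (Q : {set T}) (h : nat) (b : T)
  (U : {set T}) : {set T} := Qset e Q h b :&: U.

(* Specification of the relay-selection subroutine at iteration j for sink b:
   Rhat is exactly the set of relays lying on one chosen simple path of at most
   h edges, for each source q of Q_i^(j), from q to b inside the subgraph induced
   by Q_i^(j) \cup R_i \cup {b}. *)
Definition relay_selection (T : finType) (e : rel T) (Q Rl : {set T}) (h : nat)
  (b : T) (U Rhat : {set T}) : Prop :=
  let Qj := Qcur e Q h b U in
  let W := Qj :|: Rset e Rl h b :|: [set b] in
  exists P : T -> seq T,
    (forall q, q \in Qj ->
       [/\ path e q (P q), last q (P q) = b, size (P q) <= h,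
           uniq (q :: P q) & all (fun v => v \in W) (q :: P q)])
    /\ Rhat = \bigcup_(q in Qj) [set r in Rl | r \in P q].

(* n_i^(j): relays of Rhat not selected in earlier iterations (S). *)
Definition new_relays (T : finType) (S Rhat : {set T}) : nat := #|Rhat :\: S|.

Definition cost_eff (R : realFieldType) (T : finType) (e : rel T)
  (Q : {set T}) (h : nat) (cs cr : R) (S : {set T}) (b : T) (U Rhat : {set T})
  : R :=
  ((cs + cr * (new_relays S Rhat)%:R) / (#|Qcur e Q h b U|)%:R)%R.

(* Main.v *)
Require Import Defs.
From HB Require Import structures.
From mathcomp Require Import all_boot all_order all_algebra.
From mathcomp Require Import zify ring lra.
Import Order.TTheory GRing.Theory Num.Theory.

Lemma nat_fact (k u m h n1 : nat) : 1 <= k <= m -> m < u -> n1 <= u * (h - 1) ->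
  k * n1 <= m * (m + 1) * (h - 1) * (u - k).
Proof.
move=> /andP[k1 km] mu hn.
have h1 : k * u <= m * (m + 1) * (u - k).
  have a : k * u <= m * u by rewrite leq_mul2r km orbT.
  have b : m * u <= m * (m + 1) * (u - m).
    rewrite -mulnA leq_mul2l; apply/orP; right. nia.
  have c : m * (m + 1) * (u - m) <= m * (m + 1) * (u - k).
    by rewrite leq_mul2l leq_sub2l // orbT.
  exact: leq_trans a (leq_trans b c).
have : k * n1 <= k * u * (h - 1) by rewrite -mulnA leq_mul2l hn orbT.
move=> H; apply: (leq_trans H).
have -> : m * (m + 1) * (h - 1) * (u - k) = m * (m + 1) * (u - k) * (h - 1) by ring.
by rewrite leq_mul2r h1 orbT.
Qed.

Lemma card_bigcup_le (T I : finType) (A : {set I}) (F : I -> {set T}) :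
  #|\bigcup_(i in A) F i| <= \sum_(i in A) #|F i|.
Proof.
elim/big_rec2: _ => [|i n X _ h]; first by rewrite cards0.
apply: leq_trans (leq_add (leqnn _) h).
exact: (leq_card_setU _ X).1.
Qed.

Theorem lemma1 (R : realFieldType) (T : finType) (e : rel T)
  (Q Rl B : {set T}) (cs cr : R) (hmax mbar : nat)
  (U S Pk : {set T}) (b1 b2 : T) (Rhat1 Rhat2 : {set T}) :
  symmetric e -> irreflexive e ->
  Q :|: Rl :|: B = setT ->
  [disjoint Q & Rl] -> [disjoint Q & B] -> [disjoint Rl & B] ->
  (0 < cs)%R -> (0 < cr)%R -> 0 < hmax ->
  1 <= mbar -> mbar < #|Q| ->
  ((mbar * (mbar + 1) * (hmax - 1))%:R <= cs / cr)%R ->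
  (* state of the greedy phase at iteration j *)
  U \subset Q -> S \subset Rl -> Pk \subset B ->
  b1 \in B :\: Pk -> b2 \in B :\: Pk ->
  mbar < #|U| ->
  Qcur e Q hmax b1 U = U ->
  1 <= #|Qcur e Q hmax b2 U| <= mbar ->
  relay_selection e Q Rl hmax b1 U Rhat1 ->
  relay_selection e Q Rl hmax b2 U Rhat2 ->
  (cost_eff e Q hmax cs cr S b1 U Rhat1 <= cost_eff e Q hmax cs cr S b2 U Rhat2)%R.
Proof.
move=> _ _ _ _ _ dRB cs0 cr0 _ _ _ hN _ _ _ b1B _ mu hQ1 hk [P [hP ->]] _.
rewrite /cost_eff /new_relays hQ1.
set k := #|Qcur e Q hmax b2 U| in hk *.
set u := #|U| in mu *.
set n1 := #|_ :\: S|.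
set n2 := #|Rhat2 :\: S|.
have b1nR : b1 \notin Rl.
  move: b1B; rewrite inE => /andP[_ b1B].
  by apply/negP => b1R; move: (disjointFr dRB b1R); rewrite b1B.
have hn1 : n1 <= u * (hmax - 1).
  apply: (leq_trans (subset_leq_card (subsetDl _ _))).
  apply: leq_trans; first exact: card_bigcup_le.
  rewrite /u -hQ1 -sum_nat_const.
  apply: leq_sum => q /hP [_ hl hs _ _].
  case E: (P q) hl hs => [|x s] hl hs.
    by move: b1nR; rewrite /= -hl => _ ; rewrite (_ : [set r in Rl | r \in [::]] = set0) ?cards0 //; apply/setP=> r; rewrite !inE andbF.
  have sub : [set r in Rl | r \in x :: s] \subset [set r in x :: s] :\ b1.
    apply/subsetP => r; rewrite !inE => /andP[rR ->]; rewrite andbT.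
    by apply/negP => /eqP rb; move: b1nR; rewrite -rb rR.
  apply: (leq_trans (subset_leq_card sub)).
  have b1in : b1 \in [set r in x :: s] by rewrite inE -hl /= mem_last.
  move: (cardsD1 b1 [set r in x :: s]); rewrite b1in /= => hc.
  have : #|[set r in x :: s]| <= size (x :: s).
    by rewrite cardsE; apply: card_size.
  move: hs; rewrite /= => hs. lia.
have nf := @nat_fact _ _ _ _ _ hk mu hn1.
set N := mbar * (mbar + 1) * (hmax - 1) in hN nf.
have hN' : (N%:R * cr <= cs)%R by rewrite -ler_pdivlMr.
clearbody N.
Local Open Scope ring_scope.
have ku : (k <= u)%N by case/andP: hk => _ km; lia.
move: nf; rewrite -(ler_nat R) !natrM (natrB _ ku).
move=> nf.
have k0 : (0 < k%:R :> R) by rewrite ltr0n; case/andP: hk.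
have u0 : (0 < u%:R :> R) by rewrite ltr0n; lia.
have uk : (k%:R < u%:R :> R) by rewrite ltr_nat; case/andP: hk => _ km; lia.
have n2p : (0 <= n2%:R :> R) by [].
have n1p : (0 <= n1%:R :> R) by [].
have Np : (0 <= N%:R :> R) by [].
rewrite ler_pdivrMr // mulrAC ler_pdivlMr //.
have h1 : cr * (k%:R * n1%:R) <= cr * (N%:R * (u%:R - k%:R)) by rewrite ler_pM2l.
have h2 : N%:R * cr * (u%:R - k%:R) <= cs * (u%:R - k%:R).
  by rewrite ler_pM2r // subr_gt0.
have h3 : 0 <= cr * n2%:R * u%:R by rewrite mulr_ge0 // mulr_ge0 // ltW.
have e1 : (cs + cr * n1%:R) * k%:R = cs * k%:R + cr * (k%:R * n1%:R) by ring.
have e2 : cr * (N%:R * (u%:R - k%:R)) = N%:R * cr * (u%:R - k%:R) by ring.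
have e3 : (cs + cr * n2%:R) * u%:R = cs * k%:R + cs * (u%:R - k%:R) + cr * n2%:R * u%:R by ring.
rewrite e1 e3; rewrite e2 in h1; lra.
Qed.
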